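(* For each $l \in H^*$, the map $\Phi_l = \tau_l \circ \phi^*: R(G/H,1) \to R(G,H)$ is an injective homomorphism of bialgebras (respecting the induction products and restriction coproducts) which sends (classes of) irreducible representations to irreducible representations.
   Context: Let $G$ be a finite abelian group (written additively) and $H \subseteq G$ a subgroup. For $n \ge 1$, $S_n[G] = S_n \ltimes G^n$ is the group of $n \times n$ monomial matrices whose nonzero entries lie in $G$. Let $s: S_n[G] \to G$ be the homomorphism sending a monomial matrix to the sum of its nonzero entries, and let $G_n(G,H) = \{g \in S_n[G] : s(g) \in H\}$. For $n \ge 1$, $R_n(G,H)$ is the Grothendieck group of finite-dimensional complex representations of $G_n(G,H)$, $R_0(G,H) = \mathbb{Z}$, and $R(G,H) = \bigoplus_{n \ge 0} R_n(G,H)$, with graded bilinear form $\langle \cdot,\cdot\rangle$ for which the irreducible classes (and $1 \in R_0$) form an orthonormal basis. Using the block-diagonal embedding $G_k(G,H) \times G_m(G,H) \subseteq G_{k+m}(G,H)$, the product on $R(G,H)$ is induction and the coproduct is restriction. The same construction applied to the pair $(G/H, 1)$ gives $R(G/H,1)$ (here $G_n(G/H,1)$ is the group of monomial matrices with entries in $G/H$ whose entries sum to $0$). A ''bialgebra homomorphism'' means a map respecting product, unit, coproduct and counit. Let $\phi: G_n(G,H) \to G_n(G/H,1)$ be reduction of the matrix entries mod $H$; it is surjective with kernel the diagonal subgroup $H^n$, and $\phi^*: R(G/H,1) \to R(G,H)$ is the graded map induced by pullback of representations along $\phi$. $H^* = \mathrm{Hom}(H, \mathbb{C}^\times)$; for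 $l \in H^*$, $\tau_l$ is the graded operator on $R(G,H)$ induced by tensoring with the linear character $g \mapsto l(s(g))$ of $G_n(G,H)$ (whose restriction to $H^n$ is $l^{\otimes n}$). *)

(* Defs.v *)
From HB Require Import structures.
From mathcomp Require Import all_boot all_order all_algebra all_fingroup all_solvable all_field all_character.
Set Implicit Arguments.
Unset Strict Implicit.
Unset Printing Implicit Defensive.
Import GRing.Theory Num.Theory.

(* The finite abelian group G is written MULTIPLICATIVELY: it is the whole of
   a finGroupType [gT] (assumed abelian); "sum of entries" is the product. *)

Section Defs.

Local Open Scope group_scope.

(* Total builders that avoid proof obligations: they return the intended
   object whenever the data is valid (always the case where used below). *)
Definition mkperm (X : finType) (f : X -> X) : {perm X} :=
  odflt 1 (insub [ffun x => f x] : option {perm X}).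

Definition mkCF (gT : finGroupType) (B : {group gT}) (f : gT -> algC) : 'CF(B) :=
  odflt 0%R (insub [ffun x => ((x \in B)%:R * f x)%R] : option 'CF(B)).

Variable T : finGroupType.

(* A monomial n x n matrix with nonzero entries a_i in T and underlying
   permutation s is encoded faithfully as the permutation
   (i, x) |-> (s i, x * a_i) of 'I_n * T. *)
Definition mono_set (n : nat) (K : {set T}) : {set {perm 'I_n * T}} :=
  [set g : {perm 'I_n * T} | [exists s : 'S_n, exists a : {ffun 'I_n -> T},
     [forall p, g p == (s p.1, p.2 * a p.1)] && (\prod_(i < n) a i \in K)]].

(* G_n(T, K) : monomial matrices with entries in T whose entry-"sum" lies in K.
   (mono_set is already a group when T is abelian and K a subgroup.) *)
Definition Gn (n : nat) (K : {set T}) : {group {perm 'I_n * T}} :=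
  <<mono_set n K>>%G.

Definition sumE (n : nat) (g : {perm 'I_n * T}) : T :=
  \prod_(i < n) (g (i, 1)).2.

Definition emb (k m : nat) (x : {perm 'I_k * T}) (y : {perm 'I_m * T})
  : {perm 'I_(k + m) * T} :=
  mkperm (fun p : 'I_(k + m) * T =>
    match split p.1 with
    | inl i => let q := x (i, p.2) in (lshift m q.1, q.2)
    | inr j => let q := y (j, p.2) in (rshift k q.1, q.2)
    end).

Definition blockG (k m : nat) (K : {set T}) : {group {perm 'I_(k + m) * T}} :=
  <<[set emb x y | x in Gn k K, y in Gn m K]>>%G.

(* the product R_k x R_m -> R_(k+m): induction of the external tensor product *)
Definition indProd (k m : nat) (K : {set T})
  (chi : 'CF(Gn k K)) (psi : 'CF(Gn m K)) : 'CF(Gn (k + m) K) :=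
  @cfInd _ (Gn (k + m) K) (blockG k m K)
     (mkCF (blockG k m K) (fun g => (\sum_(x in Gn k K) \sum_(y in Gn m K)
                                      (emb x y == g)%:R * chi x * psi y)%R)).

(* R_k (x) R_m is identified with R(G_k x G_m) (virtual characters of the
   external direct product); the (k,m)-component of the coproduct is
   restriction along the block embedding. *)
Definition resCoprod (k m : nat) (K : {set T}) (f : 'CF(Gn (k + m) K))
  : 'CF(setX (Gn k K) (Gn m K)) :=
  mkCF (setX_group (Gn k K) (Gn m K)) (fun uv => f (emb uv.1 uv.2)).

Definition extTensor (k m : nat) (K : {set T})
  (chi : 'CF(Gn k K)) (psi : 'CF(Gn m K)) : 'CF(setX (Gn k K) (Gn m K)) :=
  mkCF (setX_group (Gn k K) (Gn m K)) (fun uv => (chi uv.1 * psi uv.2)%R).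

End Defs.

Section Phi.

Local Open Scope group_scope.

Variables (gT : finGroupType) (H : {group gT}).

(* R_n(G,H) lives in 'CF(GH n), R_n(G/H,1) in 'CF(GQ n) *)
Definition GH (n : nat) := Gn n (H : {set gT}).
Definition GQ (n : nat) := Gn n (1 : {set coset_of H}).

Definition phiQ (n : nat) (g : {perm 'I_n * gT}) : {perm 'I_n * coset_of H} :=
  mkperm (fun p : 'I_n * coset_of H =>
    ((g (p.1, 1)).1, p.2 * coset H (g (p.1, 1)).2)).

Definition PhiL (l : 'CF(H)) (n : nat) (f : 'CF(GQ n)) : 'CF(GH n) :=
  mkCF (GH n) (fun g => (l (sumE g) * f (phiQ g))%R).

(* Phi_l (x) Phi_l on R_k (x) R_m = R(G_k x G_m): linear extension of
   chi_i (x) chi_j |-> Phi_l chi_i (x) Phi_l chi_j over the basis of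
   external tensor products of irreducibles. *)
Definition PhiL2 (l : 'CF(H)) (k m : nat)
  (th : 'CF(setX (GQ k) (GQ m))) : 'CF(setX (GH k) (GH m)) :=
  (\sum_(i : Iirr (GQ k)) \sum_(j : Iirr (GQ m))
     '[th, extTensor 'chi_i 'chi_j] *: extTensor (PhiL l 'chi_i) (PhiL l 'chi_j))%R.

End Phi.

(* Main.v *)
Require Import Defs.
From HB Require Import structures.
From mathcomp Require Import all_boot all_order all_algebra all_fingroup all_solvable all_field all_character.
From mathcomp Require Import ring.
Set Implicit Arguments.
Unset Strict Implicit.
Unset Printing Implicit Defensive.
Import GRing.Theory Num.Theory.
Local Open Scope group_scope.

Lemma mkpermE (X : finType) (f : X -> X) : injective f -> mkperm f =1 f.
Proof.
move=> injf x; rewrite /mkperm.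
case: insubP => [u _ /= Hu | /negP []]; last first.
  by apply/injectiveP=> a b; rewrite !ffunE; apply: injf.
by rewrite -pvalE Hu ffunE.
Qed.

Lemma split_lshift k m (i : 'I_k) : split (lshift m i) = inl i.
Proof. exact: (unsplitK (inl i : 'I_k + 'I_m)). Qed.
Lemma split_rshift k m (j : 'I_m) : split (rshift k j) = inr j.
Proof. exact: (unsplitK (inr j : 'I_k + 'I_m)). Qed.

Lemma pairE (A B : Type) (p q : A * B) : p.1 = q.1 -> p.2 = q.2 -> p = q.
Proof. by case: p q => [a b] [c d] /= -> ->. Qed.

Section Emb.
Variable T : finGroupType.
Variables k m : nat.
Implicit Types (x : {perm 'I_k * T}) (y : {perm 'I_m * T}).

Definition embf x y (p : 'I_(k + m) * T) :=
    match split p.1 with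
    | inl i => let q := x (i, p.2) in (lshift m q.1, q.2)
    | inr j => let q := y (j, p.2) in (rshift k q.1, q.2)
    end.

Lemma embf_inj x y : injective (embf x y).
Proof.
move=> [a t] [b u]; rewrite /embf /= -[a]splitK -[b]splitK.
case: (split a) => i; case: (split b) => j; rewrite /= ?split_lshift ?split_rshift.
- by case=> /ord_inj e1 e2; case: (perm_inj (pairE e1 e2)) => -> ->.
- by case=> E _; have := ltn_ord (x (i, t)).1; rewrite E ltnNge leq_addr.
- by case=> E _; have := ltn_ord (x (j, u)).1; rewrite -E ltnNge leq_addr.
- by case=> /addnI/ord_inj e1 e2; case: (perm_inj (pairE e1 e2)) => -> ->.
Qed.

Lemma embE x y p : emb x y p = embf x y p.
Proof. exact: (mkpermE (@embf_inj x y)). Qed.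

Lemma embL x y i t : emb x y (lshift m i, t) = (lshift m (x (i, t)).1, (x (i, t)).2).
Proof. by rewrite embE /embf /= split_lshift. Qed.
Lemma embR x y j t : emb x y (rshift k j, t) = (rshift k (y (j, t)).1, (y (j, t)).2).
Proof. by rewrite embE /embf /= split_rshift. Qed.

Lemma embM x1 x2 y1 y2 : emb (x1 * x2) (y1 * y2) = emb x1 y1 * emb x2 y2.
Proof.
apply/permP=> [[a t]]; rewrite permM -[a]splitK; case: (split a) => i /=.
  by rewrite !embL permM -surjective_pairing.
by rewrite !embR permM -surjective_pairing.
Qed.

Lemma emb1 : emb (1 : {perm 'I_k * T}) (1 : {perm 'I_m * T}) = 1.
Proof.
apply/permP=> [[a t]]; rewrite perm1 -[a]splitK; case: (split a) => i /=.
  by rewrite !embL perm1.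
by rewrite !embR perm1.
Qed.

Lemma emb_inj x1 x2 y1 y2 : emb x1 y1 = emb x2 y2 -> x1 = x2 /\ y1 = y2.
Proof.
move=> E; split; apply/permP=> [[i t]].
  have := congr1 (fun g : {perm _} => g (lshift m i, t)) E; rewrite /= !embL.
  by case=> /ord_inj e1 e2; apply: pairE.
have := congr1 (fun g : {perm _} => g (rshift k i, t)) E; rewrite /= !embR.
by case=> /addnI/ord_inj e1 e2; apply: pairE.
Qed.

End Emb.

Section Mono.
Variable T : finGroupType.
Hypothesis Tab : abelian [set: T].
Lemma mulTC (x y : T) : x * y = y * x.
Proof. exact: (centsP Tab) x (in_setT x) y (in_setT y). Qed.
HB.instance Definition _ := SemiGroup.isCommutativeLaw.Build T (@mulg T) mulTC.

Definition spm n (g : {perm 'I_n * T}) (i : 'I_n) := (g (i, 1)).1.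
Definition apm n (g : {perm 'I_n * T}) (i : 'I_n) := (g (i, 1)).2.
Definition ismono n (g : {perm 'I_n * T}) :=
  [forall p, g p == (spm g p.1, p.2 * apm g p.1)].

Variable n : nat.
Implicit Types g h : {perm 'I_n * T}.

Lemma ismonoP g : reflect (forall p, g p = (spm g p.1, p.2 * apm g p.1)) (ismono g).
Proof. by apply: (iffP forallP) => H p; [apply/eqP | rewrite H]. Qed.

Lemma sumE_apm g : sumE g = \prod_i apm g i.
Proof. by []. Qed.

Lemma spm_inj g : ismono g -> injective (spm g).
Proof.
move/ismonoP=> Hg i j eij.
have : g (j, apm g i * (apm g j)^-1) = g (i, 1).
  by rewrite !Hg /= -mulgA mulVg mulg1 mul1g eij.
by move/perm_inj=> [].
Qed.

Lemma monoME g h : ismono g -> ismono h -> forall p,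
  (g * h) p = (spm h (spm g p.1), p.2 * (apm g p.1 * apm h (spm g p.1))).
Proof.
move=> /ismonoP Hg /ismonoP Hh p; rewrite permM Hg Hh /=; by rewrite mulgA.
Qed.

Lemma spmM g h : ismono g -> ismono h -> forall i, spm (g * h) i = spm h (spm g i).
Proof. by move=> Mg Mh i; rewrite /spm monoME. Qed.
Lemma apmM g h : ismono g -> ismono h ->
  forall i, apm (g * h) i = apm g i * apm h (spm g i).
Proof. by move=> Mg Mh i; rewrite {1}/apm monoME //= mul1g. Qed.

Lemma monoM g h : ismono g -> ismono h -> ismono (g * h).
Proof.
move=> Mg Mh; apply/ismonoP=> p; rewrite monoME // spmM // apmM //.
Qed.

Lemma sumEM g h : ismono g -> ismono h -> sumE (g * h) = sumE g * sumE h.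
Proof.
move=> Mg Mh; rewrite !sumE_apm.
under eq_bigr do rewrite apmM //.
rewrite big_split /=; congr (_ * _).
by rewrite [RHS](reindex_inj (spm_inj Mg)).
Qed.

Lemma spm1 i : spm (1 : {perm 'I_n * T}) i = i.
Proof. by rewrite /spm perm1. Qed.
Lemma apm1 i : apm (1 : {perm 'I_n * T}) i = 1.
Proof. by rewrite /apm perm1. Qed.
Lemma mono1 : ismono (1 : {perm 'I_n * T}).
Proof. by apply/ismonoP=> p; rewrite spm1 apm1 perm1 mulg1; case: p. Qed.
Lemma sumE1 : sumE (1 : {perm 'I_n * T}) = 1.
Proof. by rewrite sumE_apm big1 // => i _; rewrite apm1. Qed.

Lemma mono_setE (K : {set T}) :
  mono_set n K = [set g | ismono g && (sumE g \in K)].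
Proof.
apply/setP=> g; rewrite !inE; apply/idP/idP.
  case/existsP=> s /existsP[a /andP[/forallP Hg Ka]].
  have Es i : spm g i = s i by rewrite /spm (eqP (Hg (i, 1))).
  have Ea i : apm g i = a i by rewrite /apm (eqP (Hg (i, 1))) /= mul1g.
  apply/andP; split.
    by apply/ismonoP=> p; rewrite (eqP (Hg p)) Es Ea.
  by rewrite sumE_apm (eq_bigr _ (fun i _ => Ea i)).
case/andP=> Mg Kg; apply/existsP; exists (mkperm (spm g)).
apply/existsP; exists [ffun i => apm g i]; apply/andP; split.
  apply/forallP=> p; rewrite mkpermE ?ffunE; last exact: spm_inj.
  by rewrite (ismonoP _ Mg).
by rewrite (eq_bigr (apm g)) // => i _; rewrite ffunE.
Qed.

Lemma group_set_mono (K : {group T}) : group_set (mono_set n K).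
Proof.
apply/group_setP; rewrite mono_setE; split.
  by rewrite inE mono1 sumE1 group1.
move=> x y; rewrite !inE => /andP[Mx Kx] /andP[My Ky].
by rewrite monoM // sumEM // groupM.
Qed.

Lemma mem_Gn (K : {group T}) g : (g \in Gn n K) = ismono g && (sumE g \in K).
Proof. by rewrite /Gn /= (gen_set_id (group_set_mono K)) mono_setE inE. Qed.

Lemma Gn_mono (K : {group T}) g : g \in Gn n K -> ismono g.
Proof. by rewrite mem_Gn => /andP[]. Qed.

Lemma sumEJ (K : {group T}) g h : g \in Gn n K -> h \in Gn n K ->
  sumE (g ^ h) = sumE g.
Proof.
move=> Gg Gh; have Gh' : h^-1 \in Gn n K by rewrite groupV.
have M := Gn_mono; rewrite /conjg !sumEM ?monoM ?(M K) //.
rewrite [sumE g * _]mulTC mulgA -sumEM ?(M K) // mulVg sumE1 mul1g //.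
Qed.

Definition monoF (s : 'I_n -> 'I_n) (a : 'I_n -> T) : {perm 'I_n * T} :=
  mkperm (fun p => (s p.1, p.2 * a p.1)).

Section MonoF.
Variables (s : 'I_n -> 'I_n) (a : 'I_n -> T).
Hypothesis s_inj : injective s.
Lemma monoFE p : monoF s a p = (s p.1, p.2 * a p.1).
Proof.
apply: mkpermE => [[i t] [j u]] /= [e1 e2]; move: e1 => /s_inj e1.
by rewrite -e1 in e2 *; rewrite (mulIg _ _ _ e2).
Qed.
Lemma spm_monoF i : spm (monoF s a) i = s i.
Proof. by rewrite /spm monoFE. Qed.
Lemma apm_monoF i : apm (monoF s a) i = a i.
Proof. by rewrite /apm monoFE /= mul1g. Qed.
Lemma monoF_mono : ismono (monoF s a).
Proof. by apply/ismonoP=> p; rewrite monoFE spm_monoF apm_monoF. Qed.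
Lemma sumE_monoF : sumE (monoF s a) = \prod_i a i.
Proof. by rewrite sumE_apm; apply: eq_bigr => i _; rewrite apm_monoF. Qed.
End MonoF.

Lemma mono_eq g h : ismono g -> ismono h -> (forall i, spm g i = spm h i) ->
  (forall i, apm g i = apm h i) -> g = h.
Proof.
move=> /ismonoP Mg /ismonoP Mh Es Ea; apply/permP=> p.
by rewrite Mg Mh Es Ea.
Qed.
End Mono.

Section MonoEmb.
Variable T : finGroupType.
Hypothesis Tab : abelian [set: T].
Variables k m : nat.
Implicit Types (x : {perm 'I_k * T}) (y : {perm 'I_m * T}).

Lemma spm_embL x y i : spm (emb x y) (lshift m i) = lshift m (spm x i).
Proof. by rewrite /spm embL. Qed.
Lemma spm_embR x y j : spm (emb x y) (rshift k j) = rshift k (spm y j).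
Proof. by rewrite /spm embR. Qed.
Lemma apm_embL x y i : apm (emb x y) (lshift m i) = apm x i.
Proof. by rewrite /apm embL. Qed.
Lemma apm_embR x y j : apm (emb x y) (rshift k j) = apm y j.
Proof. by rewrite /apm embR. Qed.

Lemma emb_mono x y : ismono x -> ismono y -> ismono (emb x y).
Proof.
move=> /ismonoP Mx /ismonoP My; apply/ismonoP=> [[a t]] /=.
rewrite -[a]splitK; case: (split a) => i /=.
  by rewrite embL spm_embL apm_embL Mx.
by rewrite embR spm_embR apm_embR My.
Qed.

Lemma sumE_emb x y : sumE (emb x y) = sumE x * sumE y.
Proof.
rewrite !sumE_apm big_split_ord /=.
by congr (_ * _); apply: eq_bigr => i _; rewrite ?apm_embL ?apm_embR.
Qed.

Variable K : {group T}.

Lemma emb_Gn x y : x \in Gn k K -> y \in Gn m K -> emb x y \in Gn (k + m) K.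
Proof.
rewrite !mem_Gn // => /andP[Mx Kx] /andP[My Ky].
by rewrite emb_mono // sumE_emb groupM.
Qed.

Definition blockS := [set emb x y | x in Gn k K, y in Gn m K].

Lemma group_set_block : group_set blockS.
Proof.
apply/group_setP; split.
  by apply/imset2P; exists 1 1; rewrite ?group1 ?emb1.
move=> _ _ /imset2P[x1 y1 X1 Y1 ->] /imset2P[x2 y2 X2 Y2 ->].
by apply/imset2P; exists (x1 * x2) (y1 * y2); rewrite ?groupM ?embM.
Qed.

Lemma blockGE : blockG k m K = blockS :> {set _}.
Proof. by rewrite /blockG /= (gen_set_id group_set_block). Qed.

Lemma blockG_sub : blockG k m K \subset Gn (k + m) K.
Proof.
rewrite blockGE; apply/subsetP=> _ /imset2P[x y X Y ->]; exact: emb_Gn.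
Qed.
End MonoEmb.

Lemma mkCFE (gT : finGroupType) (B : {group gT}) (f : gT -> algC) :
  {in B &, forall x y, f (x ^ y) = f x} ->
  forall x, mkCF B f x = ((x \in B)%:R * f x)%R.
Proof.
move=> fJ x; rewrite /mkCF.
case: insubP => [u _ /= Hu | /negP []]; last first.
  rewrite genGid; apply: intro_class_fun => [y z By Bz | y /negPf-> ]; last by rewrite mul0r.
  by rewrite groupJ // By fJ.
by have := congr1 (fun h : {ffun _} => h x) Hu; rewrite ffunE => <-.
Qed.

Section Phi.
Variables (gT : finGroupType) (H : {group gT}).
Hypothesis Gab : abelian [set: gT].

Lemma nH (x : gT) : x \in 'N(H).
Proof. exact: subsetP (sub_abelian_norm Gab (subsetT H)) x (in_setT x). Qed.

Lemma Qab : abelian [set: coset_of H].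
Proof.
apply/centsP=> xb _ yb _; rewrite /commute.
rewrite -(coset_reprK xb) -(coset_reprK yb) -!morphM ?nH //.
by rewrite (mulTC Gab).
Qed.

Lemma mem_GH n g : (g \in GH H n) = ismono g && (sumE g \in H).
Proof. exact: mem_Gn. Qed.

Lemma mem_GQ n (g : {perm 'I_n * coset_of H}) :
  (g \in GQ H n) = ismono g && (sumE g == 1).
Proof. by rewrite /GQ (mem_Gn Qab 1%G g) inE. Qed.


Section Deg.
Variable n : nat.
Implicit Types g h : {perm 'I_n * gT}.

Lemma phiQ_monoF g : phiQ H g = monoF (spm g) (fun i => coset H (apm g i)).
Proof. by []. Qed.

Lemma phiQE g : ismono g -> forall p,
  phiQ H g p = (spm g p.1, p.2 * coset H (apm g p.1)).
Proof. by move=> Mg p; rewrite phiQ_monoF monoFE //; apply: spm_inj. Qed.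

Lemma spm_phiQ g : ismono g -> forall i, spm (phiQ H g) i = spm g i.
Proof. by move=> Mg i; rewrite /spm phiQE. Qed.
Lemma apm_phiQ g : ismono g -> forall i, apm (phiQ H g) i = coset H (apm g i).
Proof. by move=> Mg i; rewrite /apm phiQE //= mul1g. Qed.
Lemma phiQ_mono g : ismono g -> ismono (phiQ H g).
Proof. by move=> Mg; rewrite phiQ_monoF; apply: monoF_mono; apply: spm_inj. Qed.

Lemma sumE_phiQ g : ismono g -> sumE (phiQ H g) = coset H (sumE g).
Proof.
move=> Mg; rewrite !sumE_apm (morph_prod (coset_morphism H)) => [|i _]; last exact: nH.
by apply: eq_bigr => i _; rewrite apm_phiQ.
Qed.

Lemma phiQM g h : ismono g -> ismono h -> phiQ H (g * h) = phiQ H g * phiQ H h.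
Proof.
move=> Mg Mh; have Mgh := monoM Mg Mh.
have [Mqg Mqh] := (phiQ_mono Mg, phiQ_mono Mh).
apply: mono_eq; rewrite ?phiQ_mono ?monoM //.
  by move=> i; rewrite spmM // !spm_phiQ // spmM.
move=> i; rewrite apmM // !apm_phiQ // ?spm_phiQ // apmM //.
by rewrite morphM ?nH.
Qed.

Lemma phiQ_GQ g : g \in GH H n -> phiQ H g \in GQ H n.
Proof.
rewrite mem_GH mem_GQ => /andP[Mg Hg].
by rewrite (phiQ_mono Mg) /= (sumE_phiQ Mg) (coset_id Hg).
Qed.

Lemma phiQ_morphM : {in GH H n &, {morph @phiQ _ H n : x y / x * y}}.
Proof. by move=> g h Gg Gh; apply: phiQM; apply: (@Gn_mono _ Gab n H). Qed.

Definition phiM : {morphism GH H n >-> {perm 'I_n * coset_of H}} :=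
  Morphism phiQ_morphM.

Lemma phiM_lift q : q \in GQ H n -> exists2 g, g \in GH H n & phiQ H g = q.
Proof.
rewrite mem_GQ => /andP[Mq /eqP Sq].
have sinj := spm_inj Mq.
pose g := monoF (spm q) (fun i => repr (apm q i)).
have Mg : ismono g by apply: monoF_mono.
exists g.
  rewrite mem_GH Mg sumE_monoF //=; apply: coset_idr; first exact: nH.
  rewrite (morph_prod (coset_morphism H)) => [|i _]; last exact: nH.
  transitivity (sumE q); last exact: Sq; rewrite sumE_apm; apply: eq_bigr => i _ /=; exact: coset_reprK.
apply: mono_eq => //; first exact: phiQ_mono.
  by move=> i; rewrite spm_phiQ // spm_monoF.
by move=> i; rewrite apm_phiQ // apm_monoF // coset_reprK.
Qed.

Lemma phiM_im : phiM @* GH H n = GQ H n.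
Proof.
apply/setP=> q; apply/idP/idP.
  by case/morphimP=> g Dg Gg ->; apply: phiQ_GQ.
by case/phiM_lift=> g Gg <-; apply: mem_morphim.
Qed.

Lemma sumE_morphM : {in GH H n &, {morph (@sumE gT n) : x y / x * y}}.
Proof. by move=> g h Gg Gh; apply: sumEM => //; apply: (@Gn_mono _ Gab n H). Qed.

Definition sM : {morphism GH H n >-> gT} := Morphism sumE_morphM.

Lemma sM_im : sM @* GH H n \subset H.
Proof. by apply/subsetP=> _ /morphimP[g _ Gg ->]; move: Gg; rewrite mem_GH => /andP[]. Qed.

End Deg.

Section Block.
Variables k m : nat.

Lemma phiQ_emb (x : {perm 'I_k * gT}) (y : {perm 'I_m * gT}) :
  ismono x -> ismono y -> phiQ H (emb x y) = emb (phiQ H x) (phiQ H y).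
Proof.
move=> Mx My; have Mxy := emb_mono Mx My.
apply: mono_eq; rewrite ?phiQ_mono ?emb_mono ?phiQ_mono //.
  move=> i; rewrite spm_phiQ // -[i]splitK; case: (split i) => j /=.
    by rewrite !spm_embL spm_phiQ.
  by rewrite !spm_embR spm_phiQ.
move=> i; rewrite apm_phiQ // -[i]splitK; case: (split i) => j /=.
  by rewrite !apm_embL apm_phiQ.
by rewrite !apm_embR apm_phiQ.
Qed.

Lemma ker_block : 'ker (phiM (k + m)) \subset blockG k m H.
Proof.
apply/subsetP=> g /setIP[Gg]; rewrite !inE /= => /eqP g1.
have Mg : ismono g by apply: (@Gn_mono _ Gab _ H).
have Es i : spm g i = i by rewrite -(spm_phiQ Mg) g1 spm1.
have Ea i : apm g i \in H.
  by apply: coset_idr; [apply: nH | rewrite -(apm_phiQ Mg) g1 apm1].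
pose x := monoF id (fun i : 'I_k => apm g (lshift m i)).
pose y := monoF id (fun j : 'I_m => apm g (rshift k j)).
have Mx : ismono x by apply: monoF_mono.
have My : ismono y by apply: monoF_mono.
rewrite blockGE; apply/imset2P; exists x y.
- by rewrite mem_GH Mx sumE_monoF //; apply: group_prod.
- by rewrite mem_GH My sumE_monoF //; apply: group_prod.
apply: mono_eq; rewrite ?emb_mono //.
  move=> i; rewrite Es -[i]splitK; case: (split i) => j /=.
    by rewrite spm_embL spm_monoF.
  by rewrite spm_embR spm_monoF.
move=> i; rewrite -[i]splitK; case: (split i) => j /=.
  by rewrite apm_embL apm_monoF.
by rewrite apm_embR apm_monoF.
Qed.

Lemma phiM_block : phiM (k + m) @* blockG k m H = blockG k m (1%g : {set coset_of H}).
Proof.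
rewrite (blockGE k m 1%G) ; apply/setP=> q; apply/idP/idP.
  case/morphimP=> g Dg; rewrite blockGE => /imset2P[x y Gx Gy ->] ->.
  apply/imset2P; exists (phiQ H x) (phiQ H y); try exact: phiQ_GQ.
  by rewrite /= phiQ_emb //; apply: (@Gn_mono _ Gab _ H).
case/imset2P=> qx qy /phiM_lift[x Gx <-] /phiM_lift[y Gy <-] ->.
have Gxy : emb x y \in GH H (k + m) by apply: (emb_Gn Gab).
rewrite -phiQ_emb; try apply: (@Gn_mono _ Gab _ H) => //.
by apply: (mem_morphim (phiM (k + m))) => //; rewrite blockGE; apply/imset2P; exists x y.
Qed.

End Block.

End Phi.

Lemma mkCF_eq (gT : finGroupType) (B : {group gT}) (f1 f2 : gT -> algC) :
  {in B, f1 =1 f2} -> mkCF B f1 = mkCF B f2.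
Proof.
move=> E; rewrite /mkCF; congr (odflt _ (insub _)); apply/ffunP=> x; rewrite !ffunE.
by case: (boolP (x \in B)) => [/E -> | _]; rewrite ?mul0r.
Qed.

Section EmbMore.
Variable T : finGroupType.
Variables k m : nat.
Implicit Types (x : {perm 'I_k * T}) (y : {perm 'I_m * T}).

Lemma embV x y : ((emb x y)^-1 = emb x^-1 y^-1)%g.
Proof. by apply/eqP; rewrite eq_invg_mul -embM !mulgV emb1. Qed.

Lemma embJ x y u v : ((emb x y) ^ (emb u v) = emb (x ^ u) (y ^ v))%g.
Proof. by rewrite /conjg embV !embM. Qed.

Lemma sum_emb_eq (A : {set {perm 'I_k * T}}) (B : {set {perm 'I_m * T}})
  (F : {perm 'I_k * T} -> {perm 'I_m * T} -> algC) x0 y0 :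
  x0 \in A -> y0 \in B ->
  (\sum_(x in A) \sum_(y in B) (emb x y == emb x0 y0)%:R * F x y = F x0 y0)%R.
Proof.
move=> Ax By; rewrite (bigD1 x0) //=.
have -> : (\sum_(x in A | x != x0) \sum_(y in B) (emb x y == emb x0 y0)%:R * F x y = 0)%R.
  apply: big1 => x /andP[_ nx]; apply: big1 => y _.
  case: eqP => [/emb_inj [ex _] | _]; last by rewrite mul0r.
  by rewrite ex eqxx in nx.
rewrite addr0 (bigD1 y0) //= eqxx mul1r.
have -> : (\sum_(y in B | y != y0) (emb x0 y == emb x0 y0)%:R * F x0 y = 0)%R.
  apply: big1 => y /andP[_ ny].
  by case: eqP => [/emb_inj [_ ey] | _]; [rewrite ey eqxx in ny | rewrite mul0r].
by rewrite addr0.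
Qed.
End EmbMore.

Section Theta.
Variable T : finGroupType.
Hypothesis Tab : abelian [set: T].
Variables (k m : nat) (K : {group T}).
Variables (chi : 'CF(Gn k K)) (psi : 'CF(Gn m K)).

Definition thetaF (g : {perm 'I_(k + m) * T}) :=
  (\sum_(x in Gn k K) \sum_(y in Gn m K) (emb x y == g)%:R * chi x * psi y)%R.

Lemma thetaF_emb x0 y0 : x0 \in Gn k K -> y0 \in Gn m K ->
  thetaF (emb x0 y0) = (chi x0 * psi y0)%R.
Proof.
move=> X Y; rewrite /thetaF -(sum_emb_eq (fun x y => chi x * psi y)%R X Y).
by apply: eq_bigr => x _; apply: eq_bigr => y _; rewrite mulrA.
Qed.

Lemma thetaE x0 y0 : x0 \in Gn k K -> y0 \in Gn m K ->
  mkCF (blockG k m K) thetaF (emb x0 y0) = (chi x0 * psi y0)%R.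
Proof.
move=> X Y; rewrite mkCFE; last first.
  move=> g h; rewrite blockGE => /imset2P[x y Gx Gy ->] /imset2P[u v Gu Gv ->].
  by rewrite embJ !thetaF_emb ?groupJ // !cfunJ.
rewrite blockGE; have -> : emb x0 y0 \in blockS k m K by apply/imset2P; exists x0 y0.
by rewrite mul1r thetaF_emb.
Qed.
End Theta.

Lemma prodJ (A B : finGroupType) (u a : A) (v b : B) :
  ((u, v) ^ (a, b))%g = ((u ^ a)%g, (v ^ b)%g).
Proof. by []. Qed.

Section Expand.
Local Open Scope ring_scope.

Lemma sum_class (gT : finGroupType) (G : {group gT}) (f : gT -> algC) (a : gT) :
  (a \in G)%g -> (forall x g, (g \in G)%g -> f (x ^ g)%g = f x) ->
  \sum_(c in G) f c * (#|'C_G[a]%g|%:R *+ (a \in (c ^: G)%g)) = #|G|%:R * f a.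
Proof.
move=> Ga fJ.
under eq_bigr do rewrite mulrnAr mulrb.
rewrite -big_mkcondr /=.
rewrite (eq_bigl (fun c => c \in (a ^: G)%g)) => [|c]; last first.
  rewrite class_sym; apply/andP/idP => [[] //| Ac]; split=> //.
  exact: (subsetP (class_subG Ga (subxx G))).
rewrite (eq_bigr (fun _ => f a * #|'C_G[a]%g|%:R)) => [|_ /imsetP[g Gg ->]]; last first.
  by rewrite fJ.
by rewrite sumr_const -index_cent1 -mulrnAr -mulr_natr -natrM Lagrange ?subsetIl // mulrC.
Qed.

Variables (T1 T2 : finGroupType) (A : {group T1}) (B : {group T2}).
Local Notation P := (setX_group A B).

Definition extT (chi : 'CF(A)) (psi : 'CF(B)) : 'CF(P) :=
  mkCF P (fun uv => chi uv.1 * psi uv.2).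

Lemma extTE chi psi u v : (u \in A)%g -> (v \in B)%g -> extT chi psi (u, v) = chi u * psi v.
Proof.
move=> Au Bv; rewrite mkCFE; last first.
  by move=> [x y] [g h] /setXP[Ax By] /setXP[Ag Bh] /=; rewrite !cfunJ.
by rewrite in_setX Au Bv mul1r.
Qed.

Lemma sum_setX (F : T1 * T2 -> algC) :
  \sum_(z in P) F z = \sum_(c in A) \sum_(d in B) F (c, d).
Proof.
rewrite (pair_big_dep _ _ (fun c d => F (c, d))) /=.
by apply: eq_big => -[c d] //; rewrite /= in_setX.
Qed.

Lemma expand (th : 'CF(P)) a b : (a \in A)%g -> (b \in B)%g ->
  \sum_(i : Iirr A) \sum_(j : Iirr B) '[th, extT 'chi_i 'chi_j] * ('chi_i a * 'chi_j b)
  = th (a, b).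
Proof.
move=> Aa Bb.
pose Psi := \sum_(i : Iirr A) \sum_(j : Iirr B) ('chi_i a * 'chi_j b)^* *: extT 'chi_i 'chi_j.
transitivity '[th, Psi].
  rewrite cfdot_sumr; apply: eq_bigr => i _; rewrite cfdot_sumr; apply: eq_bigr => j _.
  by rewrite cfdotZr conjCK mulrC.
have PsiE c d : (c \in A)%g -> (d \in B)%g -> (Psi (c, d))^* =
   (#|'C_A[a]%g|%:R *+ (a \in (c ^: A)%g)) * (#|'C_B[b]%g|%:R *+ (b \in (d ^: B)%g)).
  move=> Ac Bd; rewrite -!second_orthogonality_relation // mulr_suml.
  rewrite sum_cfunE rmorph_sum; apply: eq_bigr => i _.
  rewrite sum_cfunE rmorph_sum mulr_sumr; apply: eq_bigr => j _.
  by rewrite cfunE extTE // !rmorphM /= !conjCK; ring.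
rewrite cfdotE sum_setX.
rewrite (eq_bigr (fun c => (#|'C_A[a]%g|%:R *+ (a \in (c ^: A)%g)) * (#|B|%:R * th (c, b)))); last first.
  move=> c Ac; rewrite -(@sum_class _ B (fun d => th (c, d)) b Bb); last first.
    move=> x g Bg; have := @cfunJ _ P th (c, x) (1, g)%g.
    by rewrite in_setX group1 Bg prodJ conjg1 => /(_ isT) ->.
  rewrite mulr_sumr; apply: eq_bigr => d Bd; rewrite PsiE //; ring.
rewrite (eq_bigr (fun c => #|B|%:R * th (c, b) * (#|'C_A[a]%g|%:R *+ (a \in (c ^: A)%g)))); last first.
  by move=> c _; rewrite mulrC.
rewrite sum_class //; last first.
  move=> x g Ag; have := @cfunJ _ P th (x, b) (g, 1)%g.
  by rewrite in_setX group1 Ag prodJ conjg1 => /(_ isT) ->.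
rewrite mulrA -natrM -cardsX mulrA mulVf ?mul1r //.
by rewrite pnatr_eq0 -lt0n cardG_gt0.
Qed.

End Expand.

Section ResCo.
Variable T : finGroupType.
Hypothesis Tab : abelian [set: T].
Variables (k m : nat) (K : {group T}).

Lemma resCoprodE (f : 'CF(Gn (k + m) K)) u v :
  (u \in Gn k K)%g -> (v \in Gn m K)%g -> resCoprod f (u, v) = f (emb u v).
Proof.
move=> Gu Gv; rewrite mkCFE; last first.
  move=> [x y] [g h] /setXP[Gx Gy] /setXP[Gg Gh] /=.
  by rewrite -embJ cfunJ // (emb_Gn Tab).
by rewrite in_setX Gu Gv mul1r.
Qed.

Lemma extTensorE (chi : 'CF(Gn k K)) (psi : 'CF(Gn m K)) u v :
  (u \in Gn k K)%g -> (v \in Gn m K)%g -> extTensor chi psi (u, v) = (chi u * psi v)%R.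
Proof. exact: extTE. Qed.

Lemma expandT (th : 'CF(setX (Gn k K) (Gn m K))) a b :
  (a \in Gn k K)%g -> (b \in Gn m K)%g ->
  (\sum_(i : Iirr (Gn k K)) \sum_(j : Iirr (Gn m K))
     '[th, extTensor 'chi_i 'chi_j] * ('chi_i a * 'chi_j b) = th (a, b))%R.
Proof. exact: expand. Qed.
End ResCo.

Section PhiChar.
Variables (gT : finGroupType) (H : {group gT}).
Hypothesis Gab : abelian [set: gT].
Variable l : 'CF(H).
Hypothesis Hl : (l \is a linear_char)%R.
Local Open Scope ring_scope.

Section Deg.
Variable n : nat.

Definition lam : 'CF(GH H n) := cfMorph ('Res[sM H Gab n @* GH H n] l).

Lemma lam_lin : lam \is a linear_char.
Proof. exact: cfMorph_lin_char (cfRes_lin_char _ Hl). Qed.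

Lemma lamE g : (g \in GH H n)%g -> lam g = l (sumE g).
Proof.
move=> Gg; rewrite /lam cfMorphE // cfResE //; first exact: sM_im.
exact: (mem_morphim (sM H Gab n)).
Qed.

Lemma PhiG_class (Q : {group {perm 'I_n * coset_of H}}) (f : 'CF(Q)) :
  (phiM H Gab n @* GH H n \subset Q)%g ->
  {in GH H n &, forall x y, (fun g => l (sumE g) * f (phiQ H g)) (x ^ y)%g =
                            (fun g => l (sumE g) * f (phiQ H g)) x}.
Proof.
move=> sQ g h Gg Gh /=; rewrite (sumEJ Gab Gg Gh).
have -> : phiQ H (g ^ h)%g = (phiM H Gab n g ^ phiM H Gab n h)%g by rewrite -morphJ.
by rewrite cfunJ //; apply: (subsetP sQ); apply: mem_morphim.
Qed.

Lemma PhiGE (f : 'CF(phiM H Gab n @* GH H n)) :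
  mkCF (GH H n) (fun g => l (sumE g) * f (phiQ H g)) = lam * cfMorph f.
Proof.
apply/cfun_inP=> g Gg; rewrite mkCFE; last exact: PhiG_class.
by rewrite Gg mul1r cfunE lamE // cfMorphE.
Qed.

Lemma GQE : (phiM H Gab n @* GH H n)%G = GQ H n.
Proof. by apply: val_inj; rewrite /= phiM_im. Qed.

Lemma irr_gen (Q : {group {perm 'I_n * coset_of H}}) (E : (phiM H Gab n @* GH H n)%G = Q)
  (chi : 'CF(Q)) : chi \in irr Q ->
  mkCF (GH H n) (fun g => l (sumE g) * chi (phiQ H g)) \in irr (GH H n).
Proof.
subst Q => Ichi; rewrite PhiGE; apply: mul_lin_irr; first exact: lam_lin.
by rewrite cfMorph_irr.
Qed.

Lemma PhiLE (f : 'CF(GQ H n)) g :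
  PhiL l f g = ((g \in GH H n)%:R * (l (sumE g) * f (phiQ H g))).
Proof. by apply: mkCFE; apply: PhiG_class; rewrite phiM_im. Qed.

Lemma PhiL_add (x y : 'CF(GQ H n)) : PhiL l (x + y) = PhiL l x + PhiL l y.
Proof. by apply/cfunP=> g; rewrite cfunE !PhiLE cfunE; ring. Qed.

Lemma PhiL_comb (c : Iirr (GQ H n) -> algC) :
  PhiL l (\sum_i c i *: 'chi_i) = \sum_i c i *: PhiL l 'chi_i.
Proof.
apply/cfunP=> g; rewrite PhiLE !sum_cfunE mulr_sumr mulr_sumr.
by apply: eq_bigr => i _; rewrite !cfunE PhiLE; ring.
Qed.

Lemma PhiL_irr (i : Iirr (GQ H n)) : PhiL l 'chi_i \in irr (GH H n).
Proof. exact: (irr_gen GQE (mem_irr i)). Qed.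

Lemma PhiL_vchar (x : 'CF(GQ H n)) : x \in 'Z[irr (GQ H n)]%g ->
  PhiL l x \in 'Z[irr (GH H n)]%g.
Proof.
move=> Zx; rewrite (cfun_sum_cfdot x) PhiL_comb; apply: rpred_sum => i _.
apply: rpredZ_int; first exact: Cint_cfdot_vchar_irr.
by case/irrP: (PhiL_irr i) => j ->; apply: irr_vchar.
Qed.

Lemma PhiL_inj (x y : 'CF(GQ H n)) : PhiL l x = PhiL l y -> x = y.
Proof.
move=> E; apply/cfun_inP=> q /(phiM_lift Gab)[g Gg <-].
have := congr1 (fun f : 'CF(GH H n) => f g) E; rewrite /= !PhiLE Gg !mul1r.
apply: mulfI; apply: (lin_char_neq0 Hl).
by move: Gg; rewrite (mem_GH H Gab) => /andP[].
Qed.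

Lemma PhiL_1g (x : 'CF(GQ H n)) : PhiL l x 1%g = x 1%g.
Proof.
rewrite PhiLE group1 mul1r sumE1 (lin_char1 Hl) mul1r.
by have := morph1 (phiM H Gab n) => /= ->.
Qed.

End Deg.

Lemma PhiL_unit : PhiL l (1 : 'CF(GQ H 0)) = 1.
Proof.
apply/cfun_inP=> g Gg; rewrite PhiLE Gg mul1r cfun1E Gg cfun1E (phiQ_GQ Gab Gg).
by rewrite /sumE big_ord0 (lin_char1 Hl) !mulr1.
Qed.

Section Prod.
Variables k m : nat.
Local Notation N := (k + m)%N.

Lemma block_class (B : {group {perm 'I_N * coset_of H}}) (th : 'CF(B)) :
  (phiM H Gab N @* blockG k m H \subset B)%g ->
  {in blockG k m H &, forall x y, (fun g => l (sumE g) * th (phiQ H g)) (x ^ y)%g =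
                            (fun g => l (sumE g) * th (phiQ H g)) x}.
Proof.
move=> sB g h Bg Bh /=; have sBG := subsetP (blockG_sub Gab k m H).
rewrite (sumEJ Gab (sBG _ Bg) (sBG _ Bh)).
have -> : phiQ H (g ^ h)%g = (phiM H Gab N g ^ phiM H Gab N h)%g.
  by rewrite -morphJ // sBG.
by rewrite cfunJ //; apply: (subsetP sB); apply: mem_morphim => //; apply: sBG.
Qed.

Lemma ind_gen (Q B : {group {perm 'I_N * coset_of H}})
  (EQ : (phiM H Gab N @* GH H N)%G = Q) (EB : (phiM H Gab N @* blockG k m H)%G = B)
  (th : 'CF(B)) :
  mkCF (GH H N) (fun g => l (sumE g) * ('Ind[Q] th) (phiQ H g)) =
  'Ind[GH H N] (mkCF (blockG k m H) (fun b => l (sumE b) * th (phiQ H b))).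
Proof.
subst Q B; rewrite PhiGE -cfIndMorph; first last.
- exact: subxx.
- exact: blockG_sub.
- exact: ker_block.
rewrite mulrC -cfIndM; last exact: blockG_sub.
congr ('Ind _); apply/cfun_inP=> b Bb.
have Gb : (b \in GH H N)%g by apply: (subsetP (blockG_sub Gab k m H)).
rewrite mkCFE; last by apply: block_class.
rewrite Bb mul1r cfunE cfResE ?blockG_sub // lamE // cfMorphE ?blockG_sub //.
by rewrite mulrC.
Qed.

Lemma PhiL_prod (x : 'CF(GQ H k)) (y : 'CF(GQ H m)) :
  PhiL l (indProd x y) = indProd (PhiL l x) (PhiL l y).
Proof.
have EB : (phiM H Gab N @* blockG k m H)%G = blockG k m (1%g : {set coset_of H}).
  by apply: val_inj; rewrite /= phiM_block.
rewrite /indProd [LHS](ind_gen (GQE N) EB); congr ('Ind _).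
apply: mkCF_eq => b; rewrite blockGE => /imset2P[bx bY Gx Gy ->].
have [Mx My] := (Gn_mono Gab Gx, Gn_mono Gab Gy).
rewrite -/(thetaF (PhiL l x) (PhiL l y) (emb bx bY)) thetaF_emb //.
rewrite phiQ_emb // -/(thetaF x y _) thetaE; [|exact: phiQ_GQ|exact: phiQ_GQ].
have Hx : sumE bx \in H by move: Gx; rewrite (mem_GH H Gab) => /andP[].
have Hy : sumE bY \in H by move: Gy; rewrite (mem_GH H Gab) => /andP[].
rewrite !PhiLE Gx Gy !mul1r sumE_emb (lin_charM Hl Hx Hy).
ring.
Qed.
End Prod.

Section Coprod.
Variables k m : nat.

Lemma PhiL_coprod (x : 'CF(GQ H (k + m))) :
  resCoprod (PhiL l x) = PhiL2 l (resCoprod x).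
Proof.
apply/cfun_inP=> -[u v] /setXP[Gu Gv].
have [Mu Mv] := (Gn_mono Gab Gu, Gn_mono Gab Gv).
have Hu : sumE u \in H by move: Gu; rewrite (mem_GH H Gab) => /andP[].
have Hv : sumE v \in H by move: Gv; rewrite (mem_GH H Gab) => /andP[].
rewrite (resCoprodE Gab) // PhiLE (emb_Gn Gab) // mul1r sumE_emb (lin_charM Hl Hu Hv).
rewrite phiQ_emb // -(resCoprodE (Qab H Gab)); try exact: phiQ_GQ.
rewrite -(expandT (resCoprod x) (phiQ_GQ Gab Gu) (phiQ_GQ Gab Gv)).
rewrite /PhiL2 sum_cfunE mulr_sumr; apply: eq_bigr => i _.
rewrite sum_cfunE mulr_sumr; apply: eq_bigr => j _.
rewrite cfunE extTensorE // !PhiLE Gu Gv !mul1r; ring.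
Qed.
End Coprod.

End PhiChar.

Local Close Scope group_scope.

Theorem proposition1 (gT : finGroupType) (H : {group gT})
  (Gab : abelian [set: gT]) (l : 'CF(H)) (Hl : (l \is a linear_char)%R) : (
  (* Z-linear map R_n(G/H,1) -> R_n(G,H) in each degree *)
  (forall n (x y : 'CF(GQ H n)), x \in ('Z[irr (GQ H n)])%g -> y \in ('Z[irr (GQ H n)])%g ->
      PhiL l (x + y) = (PhiL l x + PhiL l y)%R)
  /\ (forall n (x : 'CF(GQ H n)), x \in ('Z[irr (GQ H n)])%g ->
      PhiL l x \in ('Z[irr (GH H n)])%g)
  (* injective *)
  /\ (forall n (x y : 'CF(GQ H n)), x \in ('Z[irr (GQ H n)])%g -> y \in ('Z[irr (GQ H n)])%g ->
      PhiL l x = PhiL l y -> x = y)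
  (* respects the product *)
  /\ (forall k m (x : 'CF(GQ H k)) (y : 'CF(GQ H m)),
      x \in ('Z[irr (GQ H k)])%g -> y \in ('Z[irr (GQ H m)])%g ->
      PhiL l (indProd x y) = indProd (PhiL l x) (PhiL l y))
  (* respects the unit *)
  /\ PhiL l (1%R : 'CF(GQ H 0)) = 1%R
  (* respects the coproduct *)
  /\ (forall k m (x : 'CF(GQ H (k + m))), x \in ('Z[irr (GQ H (k + m))])%g ->
      resCoprod (PhiL l x) = PhiL2 l (resCoprod x))
  (* respects the counit (projection onto R_0 = Z, read off at the identity) *)
  /\ (forall x : 'CF(GQ H 0), x \in ('Z[irr (GQ H 0)])%g ->
      PhiL l x 1%g = x 1%g)
  (* sends irreducibles to irreducibles *)
  /\ (forall n (i : Iirr (GQ H n)), PhiL l 'chi_i \in irr (GH H n)))%R.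
Proof.
split; first by move=> n x y _ _; apply: PhiL_add.
split; first by move=> n x Zx; apply: PhiL_vchar.
split; first by move=> n x y _ _; apply: PhiL_inj.
split; first by move=> k m x y _ _; apply: PhiL_prod.
split; first exact: PhiL_unit.
split; first by move=> k m x _; apply: PhiL_coprod.
split; first by move=> x _; apply: PhiL_1g.
by move=> n i; apply: PhiL_irr.
Qed.
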